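(* Let $A\in\mathcal{M}_n$. The following are equivalent: (1) $M(A)$ is $\mathbb{Z}/2$-trivial, i.e. $H^*(M(A);\mathbb{Z}/2)\cong H^*((\mathbb{C}P^1)^n;\mathbb{Z}/2)$ as graded rings; (2) $\alpha^A_j\equiv0\pmod 2$ in $H^2(M(A);\mathbb{Z})$ for $j=1,\dots,n$; (3) every entry of $A$ is an even integer.
   Context: Let $\mathcal{M}_n$ be the set of integral strictly upper triangular $n\times n$ matrices $A=(A^i_j)$ ($A^i_j$ is the $(i,j)$ entry, and $A^i_j=0$ for $i\ge j$). For $A\in\mathcal{M}_n$, $M(A)$ denotes the Bott manifold obtained as the quotient of $(S^3)^n$ ($S^3\subset\mathbb{C}^2$ the unit sphere) by the free $(S^1)^n$-action $(g_1,\dots,g_n)\cdot((z_1,w_1),\dots,(z_n,w_n))=\big(((\prod_{k<j}g_k^{-A^k_j})g_jz_j,\ g_jw_j)\big)_{j=1}^n$. Let $x^A_j\in H^2(M(A);\mathbb{Z})$ be the first Chern class of the line bundle obtained as the quotient of $(S^3)^n\times\mathbb{C}$ where $g$ acts on the $\mathbb{C}$-factor by $g_j^{-1}$. Put $\alpha^A_j=\sum_{i<j}A^i_jx^A_i$. Then $H^*(M(A);\mathbb{Z})=\mathbb{Z}[x^A_1,\dots,x^A_n]/((x^A_j)^2-\alpha^A_jx^A_j\mid j=1,\dots,n)$, with $x^A_1,\dots,x^A_n$ a basis of $H^2(M(A);\mathbb{Z})$. *)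

(* Defs.v *)
From HB Require Import structures.
From mathcomp Require Import all_boot all_order all_algebra.
From mathcomp Require Import mpoly.
Set Implicit Arguments. Unset Strict Implicit. Unset Printing Implicit Defensive.
Import Order.TTheory GRing.Theory Num.Theory.
Local Open Scope ring_scope.

(* A : 'M[int]_n with A i j = A^i_j; strictly upper triangular. *)
Definition strictly_upper (n : nat) (A : 'M[int]_n) : Prop :=
  forall i j : 'I_n, (j <= i)%N -> A i j = 0.

Definition in_ideal (R : comRingType) (n : nat) (g : 'I_n -> {mpoly R[n]})
    (p : {mpoly R[n]}) : Prop :=
  exists q : 'I_n -> {mpoly R[n]}, p = \sum_(j < n) q j * g j.

(* alpha^A_j = sum_{i<j} A^i_j x_i, as a linear form over Z; x_j <-> 'X_j *)
Definition alphaZ (n : nat) (A : 'M[int]_n) (j : 'I_n) : {mpoly int[n]} :=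
  \sum_(i < n | (i < j)%N) A i j *: 'X_i.

(* relations of H^*(M(A);Z) = Z[x]/((x_j)^2 - alpha_j x_j) *)
Definition bott_relZ (n : nat) (A : 'M[int]_n) (j : 'I_n) : {mpoly int[n]} :=
  'X_j ^+ 2 - alphaZ A j * 'X_j.

(* the same relations reduced mod 2 : H^*(M(A);Z/2) = F_2[x]/(...) *)
Definition alpha2 (n : nat) (A : 'M[int]_n) (j : 'I_n) : {mpoly 'F_2[n]} :=
  \sum_(i < n | (i < j)%N) (A i j)%:~R *: 'X_i.

Definition bott_rel2 (n : nat) (A : 'M[int]_n) (j : 'I_n) : {mpoly 'F_2[n]} :=
  'X_j ^+ 2 - alpha2 A j * 'X_j.

(* relations of H^*((CP^1)^n; Z/2) = F_2[x]/((x_j)^2) *)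
Definition cp1_rel2 (n : nat) (j : 'I_n) : {mpoly 'F_2[n]} := 'X_j ^+ 2.

(* Graded ring isomorphism  F[x]/(I)  ~=  F[x]/(J)  between two rings presented
   with generators x_1..x_n of (cohomological) degree 2 and relations I, J.
   Such an isomorphism is induced by the ring map p |-> p(y_1,...,y_n) sending
   each generator x_i to a degree-2 class, represented by a linear form y_i;
   it is well defined and injective iff  f p \in (J) <-> p \in (I), and
   surjective iff every q is congruent mod (J) to some f p. *)
Definition graded_presented_iso (F : fieldType) (n : nat)
    (I J : 'I_n -> {mpoly F[n]}) : Prop :=
  exists y : 'I_n -> {mpoly F[n]},
    let f := fun p : {mpoly F[n]} => mmap (fun c : F => c%:MP_[n]) y p in
    [/\ (forall i, y i \is 1.-homog),
        (forall p, in_ideal J (f p) <-> in_ideal I p)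
      & (forall q, exists p, in_ideal J (q - f p))].

Definition Z2_trivial (n : nat) (A : 'M[int]_n) : Prop :=
  graded_presented_iso (cp1_rel2 (n:=n)) (bott_rel2 A).

(* alpha^A_j = 0 mod 2 in H^2(M(A);Z): alpha_j = 2 beta for some beta in H^2,
   i.e. alpha_j - 2 beta lies in the relation ideal, beta a linear form. *)
Definition alpha_even_in_H2 (n : nat) (A : 'M[int]_n) (j : 'I_n) : Prop :=
  exists beta : {mpoly int[n]},
    beta \is 1.-homog /\ in_ideal (bott_relZ A) (alphaZ A j - 2%:R *: beta).

(* Main.v *)
Require Import Defs.
From HB Require Import structures.
From mathcomp Require Import all_boot all_order all_algebra.
From mathcomp Require Import mpoly.
From mathcomp Require Import zify ring.
Import Order.TTheory GRing.Theory Num.Theory.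
Local Open Scope ring_scope.
Set Implicit Arguments. Unset Strict Implicit.

Section Ideal.
Variables (R : comRingType) (n : nat) (g : 'I_n -> {mpoly R[n]}).

Lemma in_ideal0 : in_ideal g 0.
Proof. by exists (fun _ => 0); rewrite big1 // => j _; rewrite mul0r. Qed.

Lemma in_idealD p1 p2 : in_ideal g p1 -> in_ideal g p2 -> in_ideal g (p1 + p2).
Proof.
move=> [q1 ->] [q2 ->]; exists (fun j => q1 j + q2 j).
by rewrite -big_split /=; apply: eq_bigr => j _; rewrite mulrDl.
Qed.

Lemma in_idealMl r p : in_ideal g p -> in_ideal g (r * p).
Proof.
move=> [q ->]; exists (fun j => r * q j).
by rewrite mulr_sumr; apply: eq_bigr => j _; rewrite mulrA.
Qed.

Lemma in_idealN p : in_ideal g p -> in_ideal g (- p).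
Proof. by move=> h; rewrite -mulN1r; apply: in_idealMl. Qed.

Lemma in_idealB p1 p2 : in_ideal g p1 -> in_ideal g p2 -> in_ideal g (p1 - p2).
Proof. by move=> h1 h2; apply: in_idealD => //; apply: in_idealN. Qed.

Lemma in_ideal_gen k : in_ideal g (g k).
Proof.
exists (fun j => (j == k)%:R); rewrite (bigD1 k) //= eqxx mul1r big1 ?addr0 //.
by move=> j /negbTE ->; rewrite mul0r.
Qed.

Lemma in_ideal_sum (I : eqType) (s : seq I) (F : I -> {mpoly R[n]}) :
  (forall i, i \in s -> in_ideal g (F i)) -> in_ideal g (\sum_(i <- s) F i).
Proof.
elim: s => [|a s IH] h; first by rewrite big_nil; apply: in_ideal0.
rewrite big_cons; apply: in_idealD; first by apply: h; rewrite inE eqxx.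
by apply: IH => i hi; apply: h; rewrite inE hi orbT.
Qed.
End Ideal.

Lemma mul_low (R : ringType) n (r g : {mpoly R[n]}) m :
  r@_0 = 0 -> g \is 2.-homog -> (mdeg m <= 2)%N -> (r * g)@_m = 0.
Proof.
move=> r0 hg hm; rewrite mcoeffM big1 // => k /eqP mk.
have [k10|k1n0] := eqVneq (k.1 : 'X_{1..n}) 0%MM.
  by rewrite k10 r0 mul0r.
rewrite (dhomog_nemf_coeff hg) ?mulr0 //.
have := congr1 mdeg mk; rewrite mdegD => e.
rewrite -mdeg_eq0 in k1n0.
apply/eqP => hb2.
have hb : mdeg (k.2 : 'X_{1..n}) = 2%N := hb2.
by move: hm; rewrite e hb addn2 !ltnS leqn0 (negbTE k1n0).
Qed.

Lemma coef_low (R : comRingType) n (g q : 'I_n -> {mpoly R[n]}) m :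
  (forall k, g k \is 2.-homog) -> (mdeg m <= 2)%N ->
  (\sum_k q k * g k)@_m = \sum_k (q k)@_0 * (g k)@_m.
Proof.
move=> hg hm; rewrite raddf_sum; apply: eq_bigr => k _ /=.
rewrite -[q k](subrK ((q k)@_0)%:MP) mulrDl mcoeffD mcoeffCM mul_low ?add0r //.
  by rewrite subrK.
by rewrite mcoeffB mcoeffC eqxx mulr1 subrr.
Qed.
Lemma F2_2 : (2%:R : 'F_2) = 0.
Proof. exact: pchar_Fp_0. Qed.

Lemma F2_int_eq0 (z : int) : ((z%:~R : 'F_2) = 0) <-> (2 %| z)%Z.
Proof.
have e2 : (2%:~R : 'F_2) = 0 by exact: F2_2.
rewrite {1}(divz_eq z 2) rmorphD rmorphM /= e2 mulr0 add0r.
have h0 := modz_ge0 z (isT : (2 != 0 :> int)).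
have h1 := ltz_mod z (isT : (2 != 0 :> int)).
split.
  move=> h; apply/dvdz_mod0P; move: h h0 h1.
  case: (z %% 2)%Z => [[|[|k]]|k] //=.
by move/dvdz_mod0P => ->.
Qed.

Lemma mpoly_F2_2 n : (2%:R : {mpoly 'F_2[n]}) = 0.
Proof. by rewrite -mpolyC_nat F2_2 mpolyC0. Qed.

Lemma sqr_sum2 (R : comRingType) (h2 : (2%:R : R) = 0) (I : Type) (s : seq I) (F : I -> R) :
  (\sum_(i <- s) F i) ^+ 2 = \sum_(i <- s) F i ^+ 2.
Proof.
elim: s => [|a s IH]; first by rewrite !big_nil expr2 mul0r.
by rewrite !big_cons sqrrD IH -mulr_natr h2 mulr0 addr0.
Qed.

Lemma coefXU (R : ringType) n (c : 'I_n -> R) j i0 :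
  (\sum_(i < n | (i < j)%N) c i *: ('X_i : {mpoly R[n]}))@_U_(i0) =
  if (i0 < j)%N then c i0 else 0.
Proof.
rewrite raddf_sum /=.
under eq_bigr => i _ do rewrite mcoeffZ mcoeffXU.
case: ifP => hi0.
  rewrite (bigD1 i0) //= eqxx mulr1 big1 ?addr0 //.
  by move=> i /andP[_ /negbTE ->]; rewrite mulr0.
by rewrite big1 // => i hi; case: eqP => [e|]; [rewrite e hi0 in hi|rewrite mulr0].
Qed.

Lemma coefAX (R : ringType) n (c : 'I_n -> R) (j : 'I_n) (m : 'X_{1..n}) :
  ((\sum_(i < n | (i < j)%N) c i *: ('X_i : {mpoly R[n]})) * 'X_j)@_m =
  \sum_(i < n | (i < j)%N) c i * ((U_(i) + U_(j))%MM == m)%:R.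
Proof.
rewrite mulr_suml raddf_sum /=; apply: eq_bigr => i _.
by rewrite -scalerAl mcoeffZ -mpolyXD mcoeffX.
Qed.

Lemma UU_neq n (i k l : 'I_n) : (i < k)%N -> ((U_(i) + U_(k))%MM == (U_(l) + U_(l))%MM) = false.
Proof.
move=> lt; apply/negbTE/eqP => /mnmP /(_ i); rewrite !mnmDE !mnm1E eqxx.
have -> : (k == i) = false by apply/negbTE; rewrite neq_ltn lt orbT.
by case: (l == i).
Qed.

Lemma UU_eq n (i i' j : 'I_n) : ((U_(i) + U_(j))%MM == (U_(i') + U_(j))%MM) = (i' == i).
Proof.
apply/eqP/eqP => [/mnmP /(_ i)|->//]; rewrite !mnmDE !mnm1E eqxx => /eqP.
by case: (i' =P i) => //; case: (j == i).
Qed.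

Lemma UU_self n (k l : 'I_n) : ((U_(k) + U_(k))%MM == (U_(l) + U_(l))%MM) = (k == l).
Proof.
apply/eqP/eqP => [/mnmP /(_ k)|->//]; rewrite !mnmDE !mnm1E eqxx.
by case: eqP.
Qed.

Lemma UU_ne0 n (i j : 'I_n) : ((U_(i) + U_(j))%MM == 0%MM) = false.
Proof.
apply/negbTE/eqP => /mnmP /(_ i); rewrite !mnmDE !mnm1E eqxx mnm0E.
by [].
Qed.

Lemma mdegUU n (i j : 'I_n) : mdeg (U_(i) + U_(j))%MM = 2%N.
Proof. by rewrite mdegD !mdeg1. Qed.

Lemma lin_homog (R : ringType) n (c : 'I_n -> R) (j : 'I_n) :
  (\sum_(i < n | (i < j)%N) c i *: ('X_i : {mpoly R[n]})) \is 1.-homog.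
Proof.
apply: rpred_sum => i _; apply: rpredZ; by rewrite dhomogX; apply/eqP; exact: mdeg1.
Qed.

Lemma rel_homog (R : ringType) n (c : 'I_n -> R) (j : 'I_n) :
  ('X_j ^+ 2 - (\sum_(i < n | (i < j)%N) c i *: ('X_i : {mpoly R[n]})) * 'X_j) \is 2.-homog.
Proof.
have hX : ('X_j : {mpoly R[n]}) \is 1.-homog by rewrite dhomogX; apply/eqP; exact: mdeg1.
apply: rpredB; first by rewrite expr2; exact: (dhomogM hX hX).
exact: (dhomogM (lin_homog c j) hX).
Qed.

Lemma relZ_homog n (A : 'M[int]_n) j : bott_relZ A j \is 2.-homog.
Proof. exact: rel_homog. Qed.

Lemma rel2_homog n (A : 'M[int]_n) j : bott_rel2 A j \is 2.-homog.
Proof. exact: rel_homog. Qed.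

Lemma part2 n (A : 'M[int]_n) (hA : strictly_upper A) :
  (forall j : 'I_n, alpha_even_in_H2 A j) <-> (forall i j : 'I_n, (2 %| A i j)%Z).
Proof.
split.
  move=> h i j; case: (ltnP i j) => hij; last by rewrite hA.
  have [beta [_ [q hq]]] := h j.
  have := congr1 (mcoeff U_(i)) hq.
  rewrite /= (coef_low (g:=bott_relZ A) q); last (by rewrite mdeg1); last by move=> k; exact: relZ_homog.
  rewrite big1; last first.
    by move=> k _; rewrite (dhomog_nemf_coeff (relZ_homog A k)) ?mulr0 //; apply/eqP; rewrite [X in X = _]mdeg1.
  rewrite mcoeffB mcoeffZ /alphaZ coefXU hij => /eqP; rewrite subr_eq0 => /eqP ->.
  by apply: dvdz_mulr.
move=> h j; exists (\sum_(i < n | (i < j)%N) (A i j %/ 2)%Z *: 'X_i); split.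
  exact: lin_homog.
rewrite /alphaZ scaler_sumr -sumrB big1; first exact: in_ideal0.
move=> i _; rewrite scalerA -scalerBl.
by rewrite mulrC divzK ?subrr ?scale0r.
Qed.

Lemma in_ideal_ext (R : comRingType) n (g1 g2 : 'I_n -> {mpoly R[n]}) p :
  g1 =1 g2 -> in_ideal g1 p -> in_ideal g2 p.
Proof.
by move=> e [q ->]; exists q; apply: eq_bigr => j _; rewrite e.
Qed.

Lemma mmap_idX n (p : {mpoly 'F_2[n]}) :
  mmap (fun c : 'F_2 => c%:MP_[n]) (fun i => 'X_i) p = p.
Proof.
rewrite /mmap [RHS]mpolyE; apply: eq_bigr => m _.
by rewrite mmap1_id mul_mpolyC.
Qed.

Lemma X_in_cp1 n (m : 'X_{1..n}) : m != 0%MM ->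
  in_ideal (cp1_rel2 (n:=n)) ('X_[m] ^+ 2).
Proof.
move=> nz.
have [i hi] : exists i, (0 < m i)%N.
  apply/existsP; move: nz; apply: contraR; rewrite negb_exists => /forallP h.
  apply/eqP/mnmP => i; rewrite mnm0E; move: (h i); rewrite lt0n negbK => /eqP.
  done.
have -> : m = (m - U_(i) + U_(i))%MM.
  by rewrite submK //; apply/mnm_lepP => k; rewrite mnm1E; case: eqP => // <-.
rewrite mpolyXD exprMn; apply: in_idealMl; exact: in_ideal_gen.
Qed.

Lemma frob_cp1 n (p : {mpoly 'F_2[n]}) :
  in_ideal (cp1_rel2 (n:=n)) (p ^+ 2 - ((p@_0) ^+ 2)%:MP).
Proof.
set c := p@_0; set r := p - c%:MP.
have r0 : r@_0 = 0 by rewrite mcoeffB mcoeffC eqxx mulr1 subrr.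
have -> : p = c%:MP + r by rewrite addrC subrK.
rewrite sqrrD -mulr_natr mpoly_F2_2 mulr0 addr0 rmorphXn addrAC subrr add0r.
rewrite [r]mpolyE sqr_sum2; last exact: mpoly_F2_2.
apply: in_ideal_sum => m hm.
rewrite exprZn -mul_mpolyC; apply: in_idealMl.
apply: X_in_cp1; apply: contraTneq hm => ->; by rewrite mcoeff_msupp r0 eqxx.
Qed.

Lemma rel2_coef_sq n (A : 'M[int]_n) (k l : 'I_n) :
  (bott_rel2 A k)@_(U_(l) + U_(l))%MM = (k == l)%:R.
Proof.
rewrite /bott_rel2 mcoeffB /alpha2 coefAX big1 => [|i' hi']; last by rewrite UU_neq ?mulr0.
by rewrite expr2 -mpolyXD mcoeffX UU_self subr0.
Qed.

Lemma rearr (R : comRingType) (x2 F c aX : R) : x2 - F + (F - c) - (x2 - aX) = aX - c.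
Proof. ring. Qed.

Lemma part1 n (A : 'M[int]_n) (hA : strictly_upper A) :
  Z2_trivial A <-> (forall i j : 'I_n, (2 %| A i j)%Z).
Proof.
split; last first.
  move=> hev; exists (fun i => 'X_i) => f.
  have eqr : bott_rel2 A =1 cp1_rel2 (n:=n).
    move=> j; rewrite /bott_rel2 /cp1_rel2 /alpha2 big1 ?mul0r ?subr0 // => i _.
    by rewrite (proj2 (F2_int_eq0 _) (hev i j)) scale0r.
  have fid : forall p, f p = p by move=> p; rewrite /f mmap_idX.
  split.
  - by move=> i; rewrite dhomogX; apply/eqP; exact: mdeg1.
  - move=> p; rewrite fid; split; apply: in_ideal_ext => // j; exact/esym/eqP/eqP.
  - by move=> q; exists q; rewrite fid subrr; apply: in_ideal0.
case=> y H; have [hy hiff hsurj] := H.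
set f := mmap (fun c : 'F_2 => c%:MP_[n]) y in hiff hsurj.
move=> i j; case: (ltnP i j) => hij; last by rewrite hA.
have [p hp] := hsurj 'X_j.
set c := (p@_0) ^+ 2.
have h1 : in_ideal (bott_rel2 A) (f p ^+ 2 - c%:MP).
  have := (hiff (p ^+ 2 - c%:MP)).2 (frob_cp1 p).
  by rewrite /f mmapB mmapC rmorphXn.
have h2 : in_ideal (bott_rel2 A) ('X_j ^+ 2 - f p ^+ 2).
  by rewrite subr_sqr mulrC; apply: in_idealMl.
have h3 : in_ideal (bott_rel2 A) (alpha2 A j * 'X_j - c%:MP).
  have := in_idealB (in_idealD h2 h1) (in_ideal_gen (bott_rel2 A) j).
  by rewrite {3}/bott_rel2 rearr.
case: h3 => q hq.
have hq0 : forall l, (q l)@_0 = 0.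
  move=> l; have := congr1 (mcoeff (U_(l) + U_(l))%MM) hq.
  rewrite /= (coef_low (g:=bott_rel2 A) q); last (by rewrite mdegUU); last exact: rel2_homog.
  rewrite (bigD1 l) //= big1 => [|k hk]; last by rewrite rel2_coef_sq (negbTE hk) mulr0.
  rewrite rel2_coef_sq eqxx mulr1 addr0 mcoeffB /alpha2 coefAX big1 => [|i' hi']; last by rewrite UU_neq ?mulr0.
  by rewrite mcoeffC UU_ne0 mulr0 subrr.
have := congr1 (mcoeff (U_(i) + U_(j))%MM) hq.
rewrite /= (coef_low (g:=bott_rel2 A) q); last (by rewrite mdegUU); last exact: rel2_homog.
rewrite big1 => [|k _]; last by rewrite hq0 mul0r.
rewrite mcoeffB /alpha2 coefAX (bigD1 i) //= UU_eq eqxx mulr1 big1 => [|i' /andP[_ hi']]; last first.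
  by rewrite UU_eq eq_sym (negbTE hi') mulr0.
rewrite mcoeffC UU_ne0 mulr0 subr0 addr0.
by move/F2_int_eq0.
Qed.

Theorem lemma6p4 (n : nat) (A : 'M[int]_n) (hA : strictly_upper A) :
  [/\ (Z2_trivial A <-> forall j : 'I_n, alpha_even_in_H2 A j)
    & ((forall j : 'I_n, alpha_even_in_H2 A j) <->
       (forall i j : 'I_n, (2 %| A i j)%Z))].
Proof.
have h2 := part2 hA; have h1 := part1 hA.
split => //; split => h; [apply/h2/h1 | apply/h1/h2] => //.
Qed.
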